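(* Let $(X,Y,R)$ be a random triple with $X\in\mathbb{R}^d$, $Y\in\{0,1\}$, $R\in\{0,1\}$, $0<P(R=1)<1$, such that all conditional probabilities $P(R=r\mid Y=y,X=x)$ and $P(Y=y\mid R=r,X=x)$ are well defined and in $(0,1)$. Let $T:\mathbb{R}^d\to\mathbb{R}^k$ be measurable, $\theta^\star=(\alpha_0^\star,\alpha_1^\star,\beta_0^\star,\beta_1^\star)$, $\omega(x,y;\theta^\star)=\exp(\alpha_y^\star+{\beta_y^\star}^\top T(x))$, $\eta_r(x,y;\theta^\star)=P(R=1)/\{P(R=1)+\omega(x,y;\theta^\star)P(R=0)\}$ and $\gamma(1\mid x;\theta^\star)=(\alpha_1^\star-\alpha_0^\star)+(\beta_1^\star-\beta_0^\star)^\top T(x)$. Let $$\gamma(y\mid x)=\log\Big\{\frac{P(R=0\mid Y=y,X=x)\,P(R=1\mid Y=0,X=x)}{P(R=1\mid Y=y,X=x)\,P(R=0\mid Y=0,X=x)}\Big\}.$$ If $\gamma(1\mid x)=\gamma(1\mid x;\theta^\star)$ for all $x$, then for any function $\nu:\mathbb{R}^d\times\{0,1\}\to\mathbb{R}$, $$\frac{\mathbb{E}\big[R\big(\frac{1}{\eta_r(X,Y;\theta^\star)}-1\big)\nu(X,Y)\bigm| X\big]}{\mathbb{E}\big[R\big(\frac{1}{\eta_r(X,Y;\theta^\star)}-1\big)\bigm| X\big]}=\mathbb{E}[\nu(X,Y)\mid X,R=0].$$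
   Context: $R=1$ indicates that $Y$ is observed and $R=0$ that it is missing. *)

(* Defs.v *)
From mathcomp Require Import all_boot all_order all_algebra.
From mathcomp Require Import all_classical all_reals all_analysis.
Set Implicit Arguments. Unset Strict Implicit. Unset Printing Implicit Defensive.
Import Order.TTheory GRing.Theory Num.Theory.
Import numFieldNormedType.Exports.
Local Open Scope classical_set_scope.
Local Open Scope ring_scope.

Section Defs.
Variable R : realType.

Definition borelRd (d : nat) : set (set 'rV[R]_d) := <<s @open 'rV[R]_d >>.

Definition dotp (k : nat) (b v : 'rV[R]_k) : R := \sum_(i < k) b ord0 i * v ord0 i.

(* A (regular version of the) conditional pmf of (Y,R) given X = x:
   pYR x y r = P(Y = y, R = r | X = x). *)
Definition condR (d : nat) (pYR : 'rV[R]_d -> bool -> bool -> R) x y r :=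
  pYR x y r / (pYR x y false + pYR x y true).
Definition condY (d : nat) (pYR : 'rV[R]_d -> bool -> bool -> R) x y r :=
  pYR x y r / (pYR x false r + pYR x true r).

Definition condE_X (d : nat) (pYR : 'rV[R]_d -> bool -> bool -> R) x
  (f : 'rV[R]_d -> bool -> bool -> R) : R :=
  \sum_(y : bool) \sum_(r : bool) pYR x y r * f x y r.

Definition condE_XR (d : nat) (pYR : 'rV[R]_d -> bool -> bool -> R) x r
  (g : 'rV[R]_d -> bool -> R) : R :=
  \sum_(y : bool) condY pYR x y r * g x y.

Definition gamma_true (d : nat) (pYR : 'rV[R]_d -> bool -> bool -> R) x y : R :=
  ln ((condR pYR x y false * condR pYR x false true) /
      (condR pYR x y true * condR pYR x false false)).

Definition omega (d k : nat) (Tf : 'rV[R]_d -> 'rV[R]_k)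
  (a0 a1 : R) (b0 b1 : 'rV[R]_k) x (y : bool) : R :=
  expR ((if y then a1 else a0) + dotp (if y then b1 else b0) (Tf x)).

Definition eta_r (d k : nat) (pi1 : R) (Tf : 'rV[R]_d -> 'rV[R]_k)
  (a0 a1 : R) (b0 b1 : 'rV[R]_k) x y : R :=
  pi1 / (pi1 + omega Tf a0 a1 b0 b1 x y * (1 - pi1)).

Definition gamma_model (d k : nat) (Tf : 'rV[R]_d -> 'rV[R]_k)
  (a0 a1 : R) (b0 b1 : 'rV[R]_k) x : R :=
  (a1 - a0) + dotp (b1 - b0) (Tf x).

End Defs.

(* Main.v *)
Require Import Defs.
From mathcomp Require Import all_boot all_order all_algebra.
From mathcomp Require Import all_classical all_reals all_analysis.
From mathcomp Require Import ring lra.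
Import Order.TTheory GRing.Theory Num.Theory.
Import numFieldNormedType.Exports.
Local Open Scope classical_set_scope.
Local Open Scope ring_scope.

Theorem lemma11
  (dT : measure_display) (Ω : measurableType dT) (R : realType)
  (P : probability Ω R) (d k : nat)
  (X : Ω -> 'rV[R]_d) (Y Rv : Ω -> bool)
  (pYR : 'rV[R]_d -> bool -> bool -> R)
  (Tf : 'rV[R]_d -> 'rV[R]_k)
  (a0 a1 : R) (b0 b1 : 'rV[R]_k) :
  (* X is a random vector, Y and R are random bits *)
  (forall B, borelRd B -> measurable (X @^-1` B)) ->
  measurable [set w | Y w] -> measurable [set w | Rv w] ->
  (* 0 < P(R = 1) < 1 *)
  (0 < fine (P [set w | Rv w]) < 1) ->
  (* pYR is a (regular) version of the conditional pmf of (Y,R) given X *)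
  (forall x y r, 0 <= pYR x y r) ->
  (forall x, \sum_(y : bool) \sum_(r : bool) pYR x y r = 1) ->
  (forall B, borelRd B -> forall y r,
     P (X @^-1` B `&` [set w | Y w = y /\ Rv w = r]) =
     (\int[P]_(w in (X @^-1` B)) (pYR (X w) y r)%:E)%E) ->
  (* all conditional probabilities are well defined and in (0,1) *)
  (forall x y r, 0 < condR pYR x y r < 1 /\ 0 < condY pYR x y r < 1) ->
  (* T is measurable *)
  (forall B, borelRd B -> borelRd (Tf @^-1` B)) ->
  (* gamma(1|x) = gamma(1|x; theta-star) for all x *)
  (forall x, gamma_true pYR x true = gamma_model Tf a0 a1 b0 b1 x) ->
  forall (nu : 'rV[R]_d -> bool -> R) (x : 'rV[R]_d),
    let eta := eta_r (fine (P [set w | Rv w])) Tf a0 a1 b0 b1 in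
    condE_X pYR x (fun x y r => (r%:R) * ((eta x y)^-1 - 1) * nu x y)
      / condE_X pYR x (fun x y r => (r%:R) * ((eta x y)^-1 - 1))
    = condE_XR pYR x false nu.
Proof.
move=> _ _ _ /andP[pi0 pi1] p0 _ _ Hc _ Hg nu x; cbv zeta.
set pi := fine _ in pi0 pi1 *.
set p := pYR x.
have pp : forall y r, 0 < p y r.
  move=> y r; have [/andP[h _] _] := Hc x y r.
  rewrite lt0r p0 andbT; apply/negP=> /eqP e.
  by move: h; rewrite /condR -/p e mul0r ltxx.
have pD : forall y, p y false + p y true != 0.
  by move=> y; rewrite gt_eqF // addr_gt0.
have pN : forall y r, p y r != 0 by move=> y r; rewrite gt_eqF.
have HQ := Hg x.
rewrite /gamma_true /condR -/p in HQ.
set Q := (_ / _) in HQ.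
have Qpos : 0 < Q.
  by rewrite /Q divr_gt0 // mulr_gt0 // divr_gt0 // ?addr_gt0.
have QE : Q = p true false * p false true / (p true true * p false false).
  by rewrite /Q; field; rewrite ?pN ?pD.
have eQ : Q = expR (gamma_model Tf a0 a1 b0 b1 x).
  by rewrite -HQ lnK // posrE.
have dotpB : dotp (b1 - b0) (Tf x) = dotp b1 (Tf x) - dotp b0 (Tf x).
  rewrite /dotp -sumrB; apply: eq_bigr => i _; rewrite !mxE; ring.
have wE : omega Tf a0 a1 b0 b1 x true = omega Tf a0 a1 b0 b1 x false * Q.
  rewrite eQ /omega /gamma_model -expRD dotpB; congr expR; ring.
have w0 : 0 < omega Tf a0 a1 b0 b1 x false by rewrite /omega expR_gt0.
rewrite /condE_X /condE_XR /condY /eta_r -/p !big_bool /= wE.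
move: w0; set w := omega _ _ _ _ _ _ _ => w0.
rewrite QE.
have A : pi + w * (1 - pi) != 0 by rewrite gt_eqF // addr_gt0 // mulr_gt0 // subr_gt0.
have B : pi + w * (p true false * p false true / (p true true * p false false)) * (1 - pi) != 0.
  by rewrite gt_eqF // addr_gt0 // mulr_gt0 // ?subr_gt0 // mulr_gt0 // divr_gt0 // mulr_gt0.
have C : p false false + p true false != 0 by rewrite gt_eqF // addr_gt0.
have D : pi != 0 by rewrite gt_eqF.
have E : w != 0 by rewrite gt_eqF.
have F : 1 - pi != 0 by rewrite gt_eqF // subr_gt0.
have w1 : 0 < 1 - pi by rewrite subr_gt0.
field.
rewrite C A D (pN false false) (pN true true) /=.
apply/andP; split; rewrite gt_eqF //.
  by rewrite addr_gt0 ?mulr_gt0.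
set e := (X in 0 < X).
have -> : e = w * (1 - pi) * (p true false * p false true * p true true
     + p false true * p true true * p false false) by rewrite /e; ring.
by rewrite mulr_gt0 ?mulr_gt0 // addr_gt0 // mulr_gt0 ?mulr_gt0.
Qed.
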